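(* Let $T\in\mathcal{KC}(V)$ and $s,p\in\rho_S(T)$ with $s\notin[p]$. Then $$Q_{c,s}^{-1}(T)S_L^{-1}(p,s)+S_R^{-1}(s,p)Q_{c,p}^{-1}(T)=Q_{c,s}^{-1}(T)S_L^{-1}(p,T)+S_R^{-1}(s,\overline{T})Q_{c,p}^{-1}(T)=Q_{c,s}^{-1}(T)S_L^{-1}(p,\overline{T})+S_R^{-1}(s,T)Q_{c,p}^{-1}(T).$$
   Context: $\mathbb{H}$: quaternions $s=s_0+s_1e_1+s_2e_2+s_3e_3$ with $e_1^2=e_2^2=e_3^2=-1$, $e_1e_2=-e_2e_1=e_3$, $e_2e_3=-e_3e_2=e_1$, $e_3e_1=-e_1e_3=e_2$; $\overline{s}=s_0-s_1e_1-s_2e_2-s_3e_3$, $|s|$ Euclidean norm, $\mathbb{S}=\{s:s_0=0,|s|=1\}$, and $[p]=\{p_0+J|p-p_0|:J\in\mathbb{S}\}$. For quaternions $s,p$ with $s\notin[p]$, the Cauchy kernels are $S_L^{-1}(p,s):=(p-\overline{s})(p^2-2s_0p+|s|^2)^{-1}$ and $S_R^{-1}(s,p):=(s^2-2p_0s+|p|^2)^{-1}(s-\overline{p})$. $V$ is a two-sided Banach space over $\mathbb{H}$, $\mathcal{I}$ the identity. $\mathcal{KC}(V)$: closed right-linear operators $T$ with two-sided linear domain, $T=T_0+e_1T_1+e_2T_2+e_3T_3$ with two-sided linear $T_i$, $\operatorname{dom}(T_i)=\operatorname{dom}(T)$, $\operatorname{dom}(T^2)\subseteq\operatorname{dom}(T_iT_j)$,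 $T_iT_j=T_jT_i$ on $\operatorname{dom}(T^2)$. $\overline{T}:=T_0-e_1T_1-e_2T_2-e_3T_3\in\mathcal{KC}(V)$ (with components $T_0,-T_1,-T_2,-T_3$), $|T|^2:=\sum_iT_i^2$, $Q_{c,s}(T):=s^2\mathcal{I}-2sT_0+|T|^2$ on $\operatorname{dom}(T^2)$ (note $Q_{c,s}(\overline{T})=Q_{c,s}(T)$). $\rho_S(T)$: the $s\in\mathbb{H}$ with $Q_{c,s}(T):\operatorname{dom}(T^2)\to V$ bijective, $Q_{c,s}^{-1}(T)$ the inverse. For $s\in\rho_S(T)$ and an operator $A\in\{T,\overline{T}\}$ with components $A_0,\dots,A_3$: $S_L^{-1}(s,A):=(s\mathcal{I}-\overline{A})Q_{c,s}^{-1}(T)$ and $S_R^{-1}(s,A):=sQ_{c,s}^{-1}(T)-\sum_{i=0}^3A_iQ_{c,s}^{-1}(T)\overline{e_i}$ (with $e_0=1$, $\overline{\overline{T}}=T$). *)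

(* Defs.v *)
From HB Require Import structures.
From mathcomp Require Import all_boot all_order all_algebra.
From mathcomp Require Import all_classical all_reals all_analysis.
Set Implicit Arguments. Unset Strict Implicit. Unset Printing Implicit Defensive.
Import Order.TTheory GRing.Theory Num.Theory.
Local Open Scope ring_scope.
Local Open Scope classical_set_scope.

Record quat (R : realType) := Quat { q0 : R; q1 : R; q2 : R; q3 : R }.

Section Quat.
Variable R : realType.
Implicit Types a b s p : quat R.

Definition qreal (r : R) : quat R := Quat r 0 0 0.
Definition q1H : quat R := qreal 1.
Definition qe1 : quat R := Quat 0 1 0 0.
Definition qe2 : quat R := Quat 0 0 1 0.
Definition qe3 : quat R := Quat 0 0 0 1.
Definition qadd a b := Quat (q0 a + q0 b) (q1 a + q1 b) (q2 a + q2 b) (q3 a + q3 b).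
Definition qopp a := Quat (- q0 a) (- q1 a) (- q2 a) (- q3 a).
Definition qsub a b := qadd a (qopp b).
(* Hamilton product: e1^2=e2^2=e3^2=-1, e1e2=e3, e2e3=e1, e3e1=e2 *)
Definition qmul a b :=
  Quat (q0 a * q0 b - q1 a * q1 b - q2 a * q2 b - q3 a * q3 b)
       (q0 a * q1 b + q1 a * q0 b + q2 a * q3 b - q3 a * q2 b)
       (q0 a * q2 b - q1 a * q3 b + q2 a * q0 b + q3 a * q1 b)
       (q0 a * q3 b + q1 a * q2 b - q2 a * q1 b + q3 a * q0 b).
Definition qconj a := Quat (q0 a) (- q1 a) (- q2 a) (- q3 a).
Definition qnorm a := Num.sqrt (q0 a ^+ 2 + q1 a ^+ 2 + q2 a ^+ 2 + q3 a ^+ 2).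
Definition qscale (r : R) a := Quat (r * q0 a) (r * q1 a) (r * q2 a) (r * q3 a).
Definition qinv a := qscale ((qnorm a ^+ 2)^-1) (qconj a).

Definition qS : set (quat R) := [set J | q0 J = 0 /\ qnorm J = 1].
Definition qclass p : set (quat R) :=
  [set q | exists2 J, qS J & q = qadd (qreal (q0 p)) (qmul J (qreal (qnorm (qsub p (qreal (q0 p))))))].

Definition ebase (i : 'I_4) : quat R :=
  match val i with 0%N => q1H | 1%N => qe1 | 2%N => qe2 | _ => qe3 end.

Definition Qq (s p : quat R) : quat R :=
  qadd (qsub (qmul p p) (qmul (qreal (2 * q0 s)) p)) (qreal (qnorm s ^+ 2)).
Definition SLq (p s : quat R) : quat R := qmul (qsub p (qconj s)) (qinv (Qq s p)).
Definition SRq (s p : quat R) : quat R := qmul (qinv (Qq p s)) (qsub s (qconj p)).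
End Quat.
Arguments qreal {R} r.
Arguments q1H {R}.
Arguments qe1 {R}.
Arguments qe2 {R}.
Arguments qe3 {R}.
Arguments ebase {R} i.
Arguments qS {R}.

Record two_sided_banach (R : realType) (V : completeNormedModType R)
    (lm : quat R -> V -> V) (rm : V -> quat R -> V) : Prop := {
  lmDl : forall a b v, lm (qadd a b) v = lm a v + lm b v;
  lmDr : forall a u v, lm a (u + v) = lm a u + lm a v;
  lmA  : forall a b v, lm (qmul a b) v = lm a (lm b v);
  lm_real : forall r v, lm (qreal r) v = r *: v;
  rmDl : forall a b v, rm v (qadd a b) = rm v a + rm v b;
  rmDr : forall a u v, rm (u + v) a = rm u a + rm v a;
  rmA  : forall a b v, rm v (qmul a b) = rm (rm v a) b;
  rm_real : forall r v, rm v (qreal r) = r *: v;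
  lmrm : forall a b v, rm (lm a v) b = lm a (rm v b);
  norm_lm : forall a v, `|lm a v| = qnorm a * `|v|;
  norm_rm : forall a v, `|rm v a| = qnorm a * `|v|
}.

Section Ops.
Variables (R : realType) (V : completeNormedModType R).
Variables (lm : quat R -> V -> V) (rm : V -> quat R -> V).

Definition two_sided_subspace (D : set V) : Prop :=
  D 0 /\ (forall u v, D u -> D v -> D (u + v)) /\
  (forall a v, D v -> D (lm a v)) /\ (forall a v, D v -> D (rm v a)).

(* two-sided linear operator with domain D (values outside D irrelevant) *)
Definition two_sided_linear (D : set V) (A : V -> V) : Prop :=
  (forall u v, D u -> D v -> A (u + v) = A u + A v) /\
  (forall a v, D v -> A (lm a v) = lm a (A v)) /\
  (forall a v, D v -> A (rm v a) = rm (A v) a).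

Definition opfull (A : 'I_4 -> V -> V) (v : V) : V := \sum_(i < 4) lm (ebase i) (A i v).
Definition opbar (A : 'I_4 -> V -> V) (v : V) : V :=
  \sum_(i < 4) lm (qconj (ebase i)) (A i v).
Definition conjcomp (A : 'I_4 -> V -> V) : 'I_4 -> V -> V :=
  fun i v => if i == ord0 then A i v else - A i v.

Definition domT2 (D : set V) (T : 'I_4 -> V -> V) : set V :=
  [set v | D v /\ D (opfull T v)].

(* T in KC(V), T given by domain D and components T_0..T_3 *)
Definition KC (D : set V) (T : 'I_4 -> V -> V) : Prop :=
  two_sided_subspace D /\
  (forall i, two_sided_linear D (T i)) /\
  closed [set x : V * V | D x.1 /\ x.2 = opfull T x.1] /\
  (forall j v, domT2 D T v -> D (T j v)) /\
  (forall i j v, domT2 D T v -> T i (T j v) = T j (T i v)).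

Definition Qcs (T : 'I_4 -> V -> V) (s : quat R) (v : V) : V :=
  lm (qmul s s) v - (lm s (T ord0 v)) *+ 2 + \sum_(i < 4) T i (T i v).

Definition rhoS (D : set V) (T : 'I_4 -> V -> V) : set (quat R) :=
  [set s | forall w, exists! v, domT2 D T v /\ Qcs T s v = w].

Definition Qinv (D : set V) (T : 'I_4 -> V -> V) (s : quat R) (w : V) : V :=
  xget 0 [set v | domT2 D T v /\ Qcs T s v = w].

Definition SLop (D : set V) (T A : 'I_4 -> V -> V) (s : quat R) (w : V) : V :=
  lm s (Qinv D T s w) - opbar A (Qinv D T s w).
(* S_R^{-1}(s,A) = s Q_{c,s}^{-1}(T) - sum_i A_i Q_{c,s}^{-1}(T) conj(e_i),
   with (B a)(v) := B (a v) *)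
Definition SRop (D : set V) (T A : 'I_4 -> V -> V) (s : quat R) (w : V) : V :=
  lm s (Qinv D T s w) - \sum_(i < 4) A i (Qinv D T s (lm (qconj (ebase i)) w)).
End Ops.

(* Main.v *)
Require Import Defs.
From HB Require Import structures.
From mathcomp Require Import all_boot all_order all_algebra.
From mathcomp Require Import all_classical all_reals all_analysis.
From mathcomp Require Import ring lra.
Import Order.TTheory GRing.Theory Num.Theory.
Local Open Scope ring_scope.

Section QA.
Variable R : realType.
Implicit Types a b s p : quat R.

Lemma quat_eq a b : q0 a = q0 b -> q1 a = q1 b -> q2 a = q2 b -> q3 a = q3 b -> a = b.
Proof. by case: a => ????; case: b => ???? /= -> -> -> ->. Qed.

Definition nq a := q0 a ^+ 2 + q1 a ^+ 2 + q2 a ^+ 2 + q3 a ^+ 2.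
Lemma nq_ge0 a : 0 <= nq a.
Proof. by rewrite /nq !addr_ge0 // sqr_ge0. Qed.
Lemma qnorm2 a : qnorm a ^+ 2 = nq a.
Proof. by rewrite /qnorm sqr_sqrtr // nq_ge0. Qed.

Lemma neq_ring {x y : R} : x != 0 -> x = y -> y != 0.
Proof. by move=> h <-. Qed.

Lemma E1 s p : nq (Qq p s) != 0 -> nq (Qq s p) != 0 ->
  qadd (SRq s p) (SLq p s) = qreal 0.
Proof.
move=> h1 h2.
rewrite /SRq /SLq /qinv !qnorm2.
move: h1 h2; rewrite /nq /Qq !qnorm2 /nq.
case: s => s0 s1 s2 s3; case: p => p0 p1 p2 p3 /= h1 h2.
apply: quat_eq => /=; field; (try by apply: (neq_ring h1); ring); (try by apply: (neq_ring h2); ring).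
Qed.

Lemma E2 s p : nq (Qq p s) != 0 -> nq (Qq s p) != 0 ->
  qadd (qmul (SLq p s) p) (qmul s (SRq s p)) = q1H.
Proof.
move=> h1 h2.
rewrite /SRq /SLq /qinv !qnorm2.
move: h1 h2; rewrite /nq /Qq !qnorm2 /nq.
case: s => s0 s1 s2 s3; case: p => p0 p1 p2 p3 /= h1 h2.
apply: quat_eq => /=; field; (try by apply: (neq_ring h1); ring); (try by apply: (neq_ring h2); ring).
Qed.

Lemma E3 s p : nq (Qq p s) != 0 -> nq (Qq s p) != 0 ->
  qadd (qmul (SLq p s) (qmul p p)) (qmul (qmul s s) (SRq s p)) = qadd p s.
Proof.
move=> h1 h2.
rewrite /SRq /SLq /qinv !qnorm2.
move: h1 h2; rewrite /nq /Qq !qnorm2 /nq.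
case: s => s0 s1 s2 s3; case: p => p0 p1 p2 p3 /= h1 h2.
apply: quat_eq => /=; field; (try by apply: (neq_ring h1); ring); (try by apply: (neq_ring h2); ring).
Qed.

Lemma sq3_eq0 (a b c : R) : a ^+ 2 + b ^+ 2 + c ^+ 2 = 0 -> [/\ a = 0, b = 0 & c = 0].
Proof.
move=> h.
have ha : 0 <= a ^+ 2 := sqr_ge0 a.
have hb : 0 <= b ^+ 2 := sqr_ge0 b.
have hc : 0 <= c ^+ 2 := sqr_ge0 c.
have a0 : a ^+ 2 = 0 by apply/eqP; rewrite eq_le ha andbT; rewrite -h -addrA lerDl addr_ge0.
have b0 : b ^+ 2 = 0 by apply/eqP; rewrite eq_le hb andbT; rewrite -h a0 add0r lerDl.
have c0 : c ^+ 2 = 0 by apply/eqP; rewrite eq_le hc andbT; rewrite -h a0 b0 !add0r.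
by split; apply/eqP; rewrite -sqrf_eq0; apply/eqP.
Qed.

Lemma sq4_eq0 (a b c d : R) : a ^+ 2 + b ^+ 2 + c ^+ 2 + d ^+ 2 = 0 ->
  [/\ a = 0, b = 0, c = 0 & d = 0].
Proof.
move=> h.
have hd : 0 <= d ^+ 2 := sqr_ge0 d.
have habc : 0 <= a ^+ 2 + b ^+ 2 + c ^+ 2 by rewrite !addr_ge0 // sqr_ge0.
have d0 : d ^+ 2 = 0 by apply/eqP; rewrite eq_le hd andbT; rewrite -h lerDr.
move: h; rewrite d0 addr0 => /sq3_eq0 [-> -> ->]; split=> //.
by apply/eqP; rewrite -sqrf_eq0; apply/eqP.
Qed.

Lemma class_of s p : q0 s = q0 p ->
  q1 s ^+ 2 + q2 s ^+ 2 + q3 s ^+ 2 = q1 p ^+ 2 + q2 p ^+ 2 + q3 p ^+ 2 -> qclass p s.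
Proof.
case: s => s0 s1 s2 s3; case: p => p0 p1 p2 p3 /= e0 ev.
rewrite /qclass /=.
set r := qnorm (qsub (Quat p0 p1 p2 p3) (qreal p0)).
have hr : r ^+ 2 = s1 ^+ 2 + s2 ^+ 2 + s3 ^+ 2.
  rewrite /r qnorm2 /nq /= ev; ring.
have r0 : 0 <= r by rewrite /r /qnorm sqrtr_ge0.
have [rz|rnz] := eqVneq r 0.
  move: hr; rewrite rz expr0n /= => /esym /sq3_eq0 [z1 z2 z3].
  exists qe1.
    split=> //; rewrite /qnorm /=.
    have -> : (0:R) ^+ 2 + 1 ^+ 2 + 0 ^+ 2 + 0 ^+ 2 = 1 by ring.
    exact: sqrtr1.
  apply: quat_eq => /=; rewrite ?z1 ?z2 ?z3 ?e0; ring.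
exists (Quat 0 (s1 / r) (s2 / r) (s3 / r)).
  split=> //; rewrite /qnorm /=.
  have -> : 0 ^+ 2 + (s1 / r) ^+ 2 + (s2 / r) ^+ 2 + (s3 / r) ^+ 2 = 1 :> R.
    have -> : (0:R) ^+ 2 + (s1 / r) ^+ 2 + (s2 / r) ^+ 2 + (s3 / r) ^+ 2 = (s1 ^+ 2 + s2 ^+ 2 + s3 ^+ 2) / r ^+ 2 by field.
    by rewrite -hr divff // expf_neq0.
  exact: sqrtr1.
apply: quat_eq => /=; rewrite ?e0; field; exact: rnz.
Qed.

Lemma Qq0_class s p : nq (Qq p s) = 0 ->
  q0 s = q0 p /\ q1 s ^+ 2 + q2 s ^+ 2 + q3 s ^+ 2 = q1 p ^+ 2 + q2 p ^+ 2 + q3 p ^+ 2.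
Proof.
rewrite /nq /Qq qnorm2 /nq.
case: s => s0 s1 s2 s3; case: p => p0 p1 p2 p3 /= /sq4_eq0 [c0 c1 c2 c3].
have [e|ne] := eqVneq s0 p0.
  split=> //; move: c0; rewrite e => c0.
  apply/eqP; rewrite eq_sym -subr_eq0; apply/eqP; apply: (etrans _ c0); ring.
have hne : s0 - p0 != 0 by rewrite subr_eq0.
have h2 : (2 : R) != 0 by rewrite pnatr_eq0.
have z : forall x : R, 2 * (s0 - p0) * x = 0 -> x = 0.
  by move=> x /eqP; rewrite !mulf_eq0 (negbTE h2) (negbTE hne) /= => /eqP.
have z1 : s1 = 0 by apply: z; apply: (etrans _ c1); ring.
have z2 : s2 = 0 by apply: z; apply: (etrans _ c2); ring.
have z3 : s3 = 0 by apply: z; apply: (etrans _ c3); ring.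
move: c0; rewrite z1 z2 z3 => c0.
have : (s0 - p0) ^+ 2 + p1 ^+ 2 + p2 ^+ 2 + p3 ^+ 2 = 0 by apply: (etrans _ c0); ring.
by move/sq4_eq0 => [/eqP]; rewrite (negbTE hne).
Qed.

Lemma qmulA a b c : qmul a (qmul b c) = qmul (qmul a b) c.
Proof. apply: quat_eq => /=; ring. Qed.

Lemma qaddC a b : qadd a b = qadd b a.
Proof. apply: quat_eq => /=; ring. Qed.

Lemma qconj1 : qconj (q1H : quat R) = q1H.
Proof. apply: quat_eq => /=; ring. Qed.

Lemma qpair (j k : 'I_4) a :
  qadd (qmul (ebase j) (qmul (qconj (ebase k)) a)) (qmul (ebase k) (qmul (qconj (ebase j)) a))
  = if j == k then qmul (qreal 2) a else qreal 0.
Proof.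
case: j => [[|[|[|[|j]]]] hj] //; case: k => [[|[|[|[|k]]]] hk] //;
  rewrite /ebase /= -?val_eqE /=; apply: quat_eq => /=; ring.
Qed.

Definition qq4 (k m l : 'I_4) : quat R :=
  qmul (ebase l) (qmul (qconj (ebase k)) (qmul (ebase m) (qconj (ebase l)))).

Lemma qquad (k m : 'I_4) :
  qadd (qq4 k m ord0) (qadd (qq4 k m (lift ord0 ord0))
   (qadd (qq4 k m (lift ord0 (lift ord0 ord0))) (qq4 k m (lift ord0 (lift ord0 (lift ord0 ord0))))))
  = qreal (if k == m then 4 else 0).
Proof.
case: k => [[|[|[|[|k]]]] hk] //; case: m => [[|[|[|[|m]]]] hm] //;
  rewrite /qq4 /ebase /= -?val_eqE /=; apply: quat_eq => /=; ring.
Qed.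
End QA.

Arguments nq {R}.

Lemma add3ACA (M : zmodType) (x1 y1 z1 x2 y2 z2 : M) :
  (x1 + y1 + z1) + (x2 + y2 + z2) = (x1 + x2) + (y1 + y2) + (z1 + z2).
Proof. by rewrite addrACA; congr (_ + _); rewrite addrACA. Qed.

Section Op.
Variables (R : realType) (V : completeNormedModType R).
Variables (lm : quat R -> V -> V) (rm : V -> quat R -> V).
Hypothesis HV : two_sided_banach lm rm.
Variables (D : set V) (T : 'I_4 -> V -> V).
Hypothesis HT : KC lm rm D T.

Local Notation dom2 := (domT2 lm D T).

Lemma lm0 a : lm a 0 = 0.
Proof.
have h := lmDr HV a 0 0; rewrite addr0 in h.
by apply: (addrI (lm a 0)); rewrite -h addr0.
Qed.

Lemma lmN a v : lm a (- v) = - lm a v.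
Proof. by apply/eqP; rewrite -addr_eq0 -(lmDr HV) addNr lm0. Qed.

Lemma lmB a u v : lm a (u - v) = lm a u - lm a v.
Proof. by rewrite (lmDr HV) lmN. Qed.

Lemma lmMn2 a v : lm a (v *+ 2) = lm a v *+ 2.
Proof. by rewrite !mulr2n (lmDr HV). Qed.

Lemma lm_sum a (I : Type) (r : seq I) (P : pred I) (F : I -> V) :
  lm a (\sum_(i <- r | P i) F i) = \sum_(i <- r | P i) lm a (F i).
Proof.
elim: r => [|j r IH]; rewrite ?big_nil ?lm0 // !big_cons.
by case: (P j) => //; rewrite (lmDr HV) IH.
Qed.

Lemma lm1 v : lm q1H v = v.
Proof. by rewrite /q1H (lm_real HV) scale1r. Qed.

Lemma lmq0 v : lm (qreal 0) v = 0.
Proof. by rewrite (lm_real HV) scale0r. Qed.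

Lemma lmA' a b v : lm a (lm b v) = lm (qmul a b) v.
Proof. by rewrite (lmA HV). Qed.

Lemma D0 : D 0. Proof. by case: HT => [[? _] _]. Qed.
Lemma DD u v : D u -> D v -> D (u + v). Proof. by case: HT => [[_ [h _]] _]; apply: h. Qed.
Lemma Dlm a v : D v -> D (lm a v). Proof. by case: HT => [[_ [_ [h _]]] _]; apply: h. Qed.
Lemma DN v : D v -> D (- v).
Proof. by move=> h; rewrite -scaleN1r -(lm_real HV); apply: Dlm. Qed.
Lemma DB u v : D u -> D v -> D (u - v).
Proof. by move=> hu hv; apply: DD => //; apply: DN. Qed.
Lemma DMn2 v : D v -> D (v *+ 2).
Proof. by move=> h; rewrite mulr2n; apply: DD. Qed.
Lemma Dsum (I : Type) (r : seq I) (P : pred I) (F : I -> V) :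
  (forall i, P i -> D (F i)) -> D (\sum_(i <- r | P i) F i).
Proof.
move=> h; elim: r => [|j r IH]; first by rewrite big_nil; exact: D0.
rewrite big_cons.
by case hj: (P j) => //; apply: DD => //; apply: h.
Qed.

Lemma Tadd i u v : D u -> D v -> T i (u + v) = T i u + T i v.
Proof. by case: HT => [_ [h _]] hu hv; case: (h i) => [ha _]; apply: ha. Qed.
Lemma Tlm i a v : D v -> T i (lm a v) = lm a (T i v).
Proof. by case: HT => [_ [h _]] hv; case: (h i) => [_ [hl _]]; apply: hl. Qed.
Lemma T0 i : T i 0 = 0.
Proof.
have h := @Tadd i 0 0 D0 D0; rewrite addr0 in h.
by apply: (addrI (T i 0)); rewrite -h addr0.
Qed.
Lemma TN i v : D v -> T i (- v) = - T i v.
Proof. by move=> h; rewrite -scaleN1r -(lm_real HV) Tlm // (lm_real HV) scaleN1r. Qed.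
Lemma TB i u v : D u -> D v -> T i (u - v) = T i u - T i v.
Proof. by move=> hu hv; rewrite Tadd ?TN //; apply: DN. Qed.
Lemma TMn2 i v : D v -> T i (v *+ 2) = T i v *+ 2.
Proof. by move=> h; rewrite !mulr2n Tadd. Qed.
Lemma Tsum i (I : Type) (r : seq I) (P : pred I) (F : I -> V) :
  (forall j, P j -> D (F j)) -> T i (\sum_(j <- r | P j) F j) = \sum_(j <- r | P j) T i (F j).
Proof.
move=> h; elim: r => [|j r IH]; rewrite ?big_nil ?T0 // !big_cons.
case hj: (P j) => //; rewrite Tadd ?IH //; first by apply: h.
exact: Dsum.
Qed.

Lemma Hdom j {v} : dom2 v -> D (T j v).
Proof. by case: HT => [_ [_ [_ [h _]]]]; apply: h. Qed.
Lemma Hcomm i j v : dom2 v -> T i (T j v) = T j (T i v).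
Proof. by case: HT => [_ [_ [_ [_ h]]]]; apply: h. Qed.
Lemma dom2D {v} : dom2 v -> D v. Proof. by case. Qed.

Lemma dom2_lm a {v} : dom2 v -> dom2 (lm a v).
Proof.
move=> hv; split; first by apply: Dlm; apply: dom2D.
rewrite /opfull; apply: Dsum => i _; rewrite Tlm; last exact: dom2D.
by apply: Dlm; apply: Dlm; apply: Hdom.
Qed.

Lemma dom2_add {u v} : dom2 u -> dom2 v -> dom2 (u + v).
Proof.
move=> hu hv; split; first by apply: DD; apply: dom2D.
rewrite /opfull; apply: Dsum => i _; rewrite Tadd; try exact: dom2D.
by rewrite (lmDr HV); apply: DD; apply: Dlm; apply: Hdom.
Qed.


Lemma Qcs_add s u v : dom2 u -> dom2 v ->
  Qcs lm T s (u + v) = Qcs lm T s u + Qcs lm T s v.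
Proof.
move=> hu hv; have Du := dom2D hu; have Dv := dom2D hv.
rewrite /Qcs add3ACA (lmDr HV) Tadd // (lmDr HV) mulrnDl opprD; congr (_ + _).
rewrite -big_split /=; apply: eq_bigr => i _.
by rewrite Tadd ?Tadd //; apply: Hdom.
Qed.

Lemma Qcs_lm s a v : qmul s a = qmul a s -> dom2 v ->
  Qcs lm T s (lm a v) = lm a (Qcs lm T s v).
Proof.
move=> sa hv; have Dv := dom2D hv.
rewrite /Qcs (lmDr HV) lmB lmMn2 lm_sum !lmA' Tlm // !lmA'.
have -> : qmul (qmul s s) a = qmul a (qmul s s).
  by rewrite -qmulA sa qmulA sa -qmulA.
rewrite sa; congr (_ + _).
apply: eq_bigr => i _; rewrite Tlm // Tlm //; exact: Hdom.
Qed.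

Section Inv.
Variable s : quat R.
Hypothesis Hs : rhoS lm D T s.
Local Notation A := (Qinv lm D T s).

Lemma QinvP w : dom2 (A w) /\ Qcs lm T s (A w) = w.
Proof. have [v [Pv _]] := Hs w; exact: (@xgetI V 0 [set v | dom2 v /\ Qcs lm T s v = w] v Pv). Qed.

Lemma QinvK {u} : dom2 u -> A (Qcs lm T s u) = u.
Proof.
move=> hu; have [v [Pv uq]] := Hs (Qcs lm T s u).
rewrite /Qinv; apply: xget_unique => //.
by move=> y Py; rewrite -(uq _ Py); apply: uq.
Qed.

Lemma Qinv_add u w : A (u + w) = A u + A w.
Proof.
have [d1 e1] := QinvP u; have [d2 e2] := QinvP w.
by rewrite -(QinvK (dom2_add d1 d2)) Qcs_add // e1 e2.
Qed.

Lemma Qinv0 : A 0 = 0.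
Proof.
have h := Qinv_add 0 0; rewrite addr0 in h.
by apply: (addrI (A 0)); rewrite -h addr0.
Qed.

Lemma Qinv_N u : A (- u) = - A u.
Proof. by apply/eqP; rewrite -addr_eq0 -Qinv_add addNr Qinv0. Qed.

Lemma Qinv_B u w : A (u - w) = A u - A w.
Proof. by rewrite Qinv_add Qinv_N. Qed.

Lemma Qinv_sum (I : Type) (r : seq I) (P : pred I) (F : I -> V) :
  A (\sum_(i <- r | P i) F i) = \sum_(i <- r | P i) A (F i).
Proof.
elim: r => [|j r IH]; rewrite ?big_nil ?Qinv0 // !big_cons.
by case: (P j) => //; rewrite Qinv_add IH.
Qed.

Lemma Qinv_lm a w : qmul s a = qmul a s -> A (lm a w) = lm a (A w).
Proof.
move=> sa; have [d e] := QinvP w.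
by rewrite -[in LHS]e -Qcs_lm // QinvK //; apply: dom2_lm.
Qed.

End Inv.

Lemma Mn2_inj (x y : V) : x *+ 2 = y *+ 2 -> x = y.
Proof.
move=> h; have : (2:R)^-1 *: (x *+ 2) = 2^-1 *: (y *+ 2) by rewrite h.
by rewrite -[x *+ 2]scaler_nat -[y *+ 2]scaler_nat !scalerA mulVf ?scale1r // pnatr_eq0.
Qed.

Lemma lm_q2 a x : lm (qmul (qreal 2) a) x = lm a x *+ 2.
Proof. by rewrite -lmA' (lm_real HV) scaler_nat. Qed.

Lemma extract (X : 'I_4 -> V) :
  (forall a, D (\sum_(k < 4) lm (qconj (ebase k)) (lm a (X k)))) -> forall m, D (X m).
Proof.
move=> h m.
have e : \sum_(l < 4) lm (ebase l) (\sum_(k < 4) lm (qconj (ebase k))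
           (lm (qmul (ebase m) (qconj (ebase l))) (X k))) = X m *+ 4.
  transitivity (\sum_(l < 4) \sum_(k < 4) lm (@qq4 R k m l) (X k)).
    apply: eq_bigr => l _; rewrite lm_sum; apply: eq_bigr => k _.
    by rewrite !lmA' /qq4 -qmulA.
  rewrite exchange_big /=.
  transitivity (\sum_(k < 4) (if k == m then X k *+ 4 else 0)).
    apply: eq_bigr => k _.
    rewrite !big_ord_recl big_ord0 addr0 -!(lmDl HV) qquad.
    by case: eqP => _; rewrite (lm_real HV) ?scaler_nat ?scale0r.
  by rewrite (bigD1 m) //= eqxx big1 ?addr0 // => k /negbTE ->.
have hD : D (\sum_(l < 4) lm (ebase l) (\sum_(k < 4) lm (qconj (ebase k))
           (lm (qmul (ebase m) (qconj (ebase l))) (X k)))).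
  by apply: Dsum => l _; apply: Dlm; apply: h.
rewrite e in hD.
have -> : X m = lm (qreal 4^-1) (X m *+ 4).
  by rewrite (lm_real HV) -[X m *+ 4]scaler_nat scalerA mulVf ?scale1r // pnatr_eq0.
exact: Dlm.
Qed.


Lemma reg y : dom2 y -> D (\sum_(j < 4) T j (T j y)) -> forall j k, D (T j (T k y)).
Proof.
move=> hy hS j.
have DT k : D (T k y) := Hdom k hy.
apply: extract => a.
set z := \sum_(k < 4) lm (qconj (ebase k)) (lm a (T k y)).
have Dz : D z by apply: Dsum => k _; apply: Dlm; apply: Dlm.
have Tz : opfull lm T z = lm a (\sum_(i < 4) T i (T i y)).
  rewrite /opfull.
  transitivity (\sum_(i < 4) \sum_(k < 4)
     lm (qmul (ebase i) (qmul (qconj (ebase k)) a)) (T i (T k y))).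
    apply: eq_bigr => i _; rewrite /z Tsum; last by move=> k _; apply: Dlm; apply: Dlm.
    rewrite lm_sum; apply: eq_bigr => k _.
    by rewrite Tlm ?Tlm ?lmA' ?qmulA //; apply: Dlm.
  apply: Mn2_inj.
  rewrite mulr2n {2}exchange_big -big_split /=.
  transitivity (\sum_(i < 4) \sum_(k < 4) (if i == k then lm a (T i (T i y)) *+ 2 else 0)).
    apply: eq_bigr => i _; rewrite -big_split /=; apply: eq_bigr => k _.
    rewrite (Hcomm k i y hy) -(lmDl HV) qpair.
    by case: eqP => [<-|_]; [rewrite lm_q2 | rewrite lmq0].
  rewrite lm_sum -sumrMnl; apply: eq_bigr => i _.
  by rewrite (bigD1 i) //= eqxx big1 ?addr0 // => k; rewrite eq_sym => /negbTE ->.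
have hz : dom2 z by split => //; rewrite Tz; apply: Dlm.
have := Hdom j hz.
suff -> : T j z = \sum_(k < 4) lm (qconj (ebase k)) (lm a (T j (T k y))) by [].
rewrite /z Tsum; last by move=> k _; apply: Dlm; apply: Dlm.
by apply: eq_bigr => k _; rewrite Tlm ?Tlm //; apply: Dlm.
Qed.


Section Inv2.
Variable s : quat R.
Hypothesis Hs : rhoS lm D T s.
Local Notation A := (Qinv lm D T s).

Lemma Qinv_T i w : dom2 w -> A (T i w) = T i (A w).
Proof.
move=> hw.
have [hy ey] := QinvP s Hs w.
set y := A w in hy ey *.
have DT k : D (T k y) := Hdom k hy.
have Dy := dom2D hy.
have hS : D (\sum_(j < 4) T j (T j y)).
  have -> : \sum_(j < 4) T j (T j y) = w - (lm (qmul s s) y - lm s (T ord0 y) *+ 2).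
    by rewrite -ey /Qcs [_ - _ + _]addrC addrK.
  apply: DB; first exact: dom2D hw.
  by apply: DB; [apply: Dlm | apply: DMn2; apply: Dlm].
have Rg := reg y hy hS.
have hTy k : dom2 (T k y).
  split => //; rewrite /opfull; apply: Dsum => j _; apply: Dlm; exact: Rg.
have -> : T i w = Qcs lm T s (T i y).
  rewrite -ey /Qcs Tadd; first last.
  - by apply: Dsum => j _; apply: Rg.
  - by apply: DB; [apply: Dlm | apply: DMn2; apply: Dlm].
  rewrite TB; first last.
  - by apply: DMn2; apply: Dlm.
  - exact: Dlm.
  rewrite TMn2; last exact: Dlm.
  rewrite Tlm // Tlm // Tsum; last by move=> j _; apply: Rg.
  rewrite (Hcomm i ord0 y hy); congr (_ + _); apply: eq_bigr => j _.
  by rewrite (Hcomm j i y hy) (Hcomm j i (T j y) (hTy j)).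
by rewrite QinvK.
Qed.

Lemma SRop_eq (Ac : 'I_4 -> V -> V)
  (hc : forall i w, dom2 w -> A (Ac i w) = Ac i (A w))
  (hl : forall i a w, dom2 w -> Ac i (lm a w) = lm a (Ac i w)) x :
  dom2 x -> SRop lm D T Ac s x = A (lm s x - opbar lm Ac x).
Proof.
move=> hx; rewrite /SRop /opbar (Qinv_B s Hs) (Qinv_lm s Hs) // (Qinv_sum s Hs).
congr (_ - _); apply: eq_bigr => i _.
rewrite -hc; last exact: dom2_lm.
by rewrite hl.
Qed.

Lemma hcT i w : dom2 w -> A (T i w) = T i (A w).
Proof. exact: Qinv_T. Qed.

Lemma hcC i w : dom2 w -> A (conjcomp T i w) = conjcomp T i (A w).
Proof.
by move=> hw; rewrite /conjcomp; case: ifP => _; rewrite ?(Qinv_N s Hs) Qinv_T.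
Qed.

End Inv2.

Lemma hlT i a w : dom2 w -> T i (lm a w) = lm a (T i w).
Proof. by move=> hw; rewrite Tlm //; exact: dom2D. Qed.

Lemma hlC i a w : dom2 w -> conjcomp T i (lm a w) = lm a (conjcomp T i w).
Proof.
by move=> hw; rewrite /conjcomp; case: ifP => _; rewrite Tlm ?lmN //; exact: dom2D.
Qed.

Lemma opbar_sum x : opbar lm T x + opbar lm (conjcomp T) x = T ord0 x *+ 2.
Proof.
rewrite /opbar -big_split /= (bigD1 ord0) //= big1 ?addr0.
  by rewrite /conjcomp eqxx /ebase /= qconj1 lm1 mulr2n.
by move=> i /negbTE hi; rewrite /conjcomp hi lmN subrr.
Qed.

Section Main.
Variables s p : quat R.
Hypothesis Hs : rhoS lm D T s.
Hypothesis Hp : rhoS lm D T p.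
Hypothesis Hsp : ~ qclass p s.

Lemma main_res :
  (forall v : V,
     Qinv lm D T s (lm (SLq p s) v) + lm (SRq s p) (Qinv lm D T p v)
     = Qinv lm D T s (SLop lm D T T p v)
       + SRop lm D T (conjcomp T) s (Qinv lm D T p v)) /\
  (forall v : V,
     Qinv lm D T s (SLop lm D T T p v)
       + SRop lm D T (conjcomp T) s (Qinv lm D T p v)
     = Qinv lm D T s (SLop lm D T (conjcomp T) p v)
       + SRop lm D T T s (Qinv lm D T p v)).
Proof.
have h1 : nq (Qq p s) != 0.
  by apply/eqP => /Qq0_class [e0 ev]; apply: Hsp; apply: class_of.
have h2 : nq (Qq s p) != 0.
  apply/eqP => /Qq0_class [e0 ev]; apply: Hsp; apply: class_of; by rewrite ?e0 ?ev.
split => v; have [hx ex] := QinvP p Hp v; set x := Qinv lm D T p v in hx ex *.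
  rewrite /SLop -/x (SRop_eq s Hs (conjcomp T) (hcC s Hs) hlC x hx) -(Qinv_add s Hs).
  rewrite -[lm (SRq s p) x](QinvK s Hs (dom2_lm _ hx)) -(Qinv_add s Hs).
  congr (Qinv lm D T s _).
  rewrite addrACA -opprD opbar_sum -(lmDl HV).
  have Dx := dom2D hx.
  rewrite -ex /Qcs (lmDr HV) lmB lmMn2 !lmA' Tlm // !lmA'.
  have -> : \sum_(i < 4) T i (T i (lm (SRq s p) x)) = lm (SRq s p) (\sum_(i < 4) T i (T i x)).
    rewrite lm_sum; apply: eq_bigr => i _; rewrite Tlm // Tlm //; exact: Hdom.
  rewrite add3ACA -!(lmDl HV) -opprD -mulrnDl -(lmDl HV).
  rewrite E3 // E2 // (qaddC _ (SLq p s)) E1 // lmq0 addr0 lm1.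
  done.
rewrite /SLop -/x (SRop_eq s Hs (conjcomp T) (hcC s Hs) hlC x hx) (SRop_eq s Hs T (hcT s Hs) hlT x hx) -!(Qinv_add s Hs).
congr (Qinv lm D T s _).
by rewrite addrACA [RHS]addrACA; congr (_ + _); rewrite addrC.
Qed.

End Main.

End Op.

Local Open Scope classical_set_scope.

Theorem lemma3p9 (R : realType) (V : completeNormedModType R)
    (lm : quat R -> V -> V) (rm : V -> quat R -> V)
    (HV : two_sided_banach lm rm)
    (D : set V) (T : 'I_4 -> V -> V) (HT : KC lm rm D T)
    (s p : quat R) (Hs : rhoS lm D T s) (Hp : rhoS lm D T p)
    (Hsp : ~ qclass p s) :
  (forall v : V,
     Qinv lm D T s (lm (SLq p s) v) + lm (SRq s p) (Qinv lm D T p v)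
     = Qinv lm D T s (SLop lm D T T p v)
       + SRop lm D T (conjcomp T) s (Qinv lm D T p v)) /\
  (forall v : V,
     Qinv lm D T s (SLop lm D T T p v)
       + SRop lm D T (conjcomp T) s (Qinv lm D T p v)
     = Qinv lm D T s (SLop lm D T (conjcomp T) p v)
       + SRop lm D T T s (Qinv lm D T p v)).
Proof. exact: (@main_res R V lm rm HV D T HT s p Hs Hp Hsp). Qed.
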